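(* Let $M$ be a graded generalized Eulerian $A_1(K)$-module. Then $H_0(X_1;M)=M/X_1M$ and $H_1(X_1;M)=\ker(X_1\colon M(-1)\to M)$ are graded $K$-vector spaces concentrated in degree $0$.
   Context: $K$ is a field of characteristic zero; $A_1(K)=K\langle X_1,\partial_1\rangle$ with $\partial_1X_1-X_1\partial_1=1$, graded by $\deg X_1=1$, $\deg\partial_1=-1$. A graded $A_1(K)$-module $M$ is generalized Eulerian if for every homogeneous $z\in M$ of degree $|z|$ there is $a\ge1$ with $(X_1\partial_1-|z|)^az=0$. $M(l)_j=M_{j+l}$. *)

(* Defs.v *)
From HB Require Import structures.
From mathcomp Require Import all_boot all_order all_algebra.
Set Implicit Arguments. Unset Strict Implicit. Unset Printing Implicit Defensive.
Import Order.TTheory GRing.Theory Num.Theory.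
Local Open Scope ring_scope.

Definition is_Z_grading (K : fieldType) (M : lmodType K) (G : int -> {pred M}) : Prop :=
  [/\ (forall j, 0 \in G j),
      (forall j (a : K) (x y : M), x \in G j -> y \in G j -> a *: x + y \in G j),
      (forall m : M, exists (s : seq int) (f : int -> M),
          [/\ uniq s, (forall j, f j \in G j) & m = \sum_(j <- s) f j])
    & (forall (s : seq int) (f : int -> M), uniq s -> (forall j, f j \in G j) ->
          \sum_(j <- s) f j = 0 -> forall j, j \in s -> f j = 0)].

(* A graded A_1(K)-module structure on M: X = action of X_1, D = action of
   partial_1, K-linear, with D X - X D = 1, deg X_1 = 1, deg partial_1 = -1. *)
Definition is_graded_A1_module (K : fieldType) (M : lmodType K)
    (G : int -> {pred M}) (X D : {linear M -> M}) : Prop :=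
  [/\ is_Z_grading G,
      (forall m : M, D (X m) - X (D m) = m),
      (forall j (m : M), m \in G j -> X m \in G (j + 1)%R)
    & (forall j (m : M), m \in G j -> D m \in G (j - 1)%R)].

Definition gen_Eulerian (K : fieldType) (M : lmodType K)
    (G : int -> {pred M}) (X D : {linear M -> M}) : Prop :=
  forall (j : int) (z : M), z \in G j ->
    exists a : nat, (0 < a)%N /\
      iter a (fun w => X (D w) - (j%:~R : K) *: w) z = 0.

(* Main.v *)
Require Import Defs.
From HB Require Import structures.
From mathcomp Require Import all_boot all_order all_algebra.
Import Order.TTheory GRing.Theory Num.Theory.
Local Open Scope ring_scope.

Lemma intr_neq0_char0 {K : fieldType} {j : int} :
  [pchar K] =i pred0 -> j != 0 -> (j%:~R : K) != 0.
Proof.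
move=> ch0 jn0; have H := (pcharf0P K).1 ch0.
case: j jn0 => n jn0.
  by rewrite -pmulrn H; apply: contra jn0 => /eqP ->.
by rewrite NegzE mulrNz oppr_eq0 -pmulrn H.
Qed.

Theorem mainTheorem10 (K : fieldType) (M : lmodType K)
    (G : int -> {pred M}) (X D : {linear M -> M}) :
  [pchar K] =i pred0 ->
  is_graded_A1_module G X D ->
  gen_Eulerian G X D ->
  (forall (j : int) (z : M), j != 0 -> z \in G j ->
     exists2 y : M, y \in G (j - 1) & X y = z) /\
  (forall (j : int) (z : M), j != 0 -> z \in G (j - 1) -> X z = 0 -> z = 0).
Proof.
move=> ch0 [[G0 Glin _ _] DX XG DG] Eul; split.
  move=> j z jn0 zG.
  have jK := intr_neq0_char0 ch0 jn0.
  set c := (j%:~R : K).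
  set N := fun w => X (D w) - c *: w.
  have GZ : forall (k : int) (a : K) w, w \in G k -> a *: w \in G k.
    by move=> k a w wG; rewrite -[_ *: w]addr0; apply: Glin.
  have GD : forall (k : int) w y, w \in G k -> y \in G k -> w + y \in G k.
    by move=> k w y wG yG; rewrite -[w]scale1r; apply: Glin.
  have XDG : forall w, w \in G j -> X (D w) \in G j.
    by move=> w wG; have := XG _ _ (DG _ _ wG); rewrite subrK.
  have main : forall a z, z \in G j -> iter a N z = 0 ->
      exists2 w, w \in G j & X (D w) = z.
    elim=> [|a IH] z0 z0G.
      by move=> /= ->; exists 0; rewrite ?G0 // !linear0.
    rewrite iterSr => /IH [].
      by rewrite /N; apply: (GD); [apply: (XDG) | rewrite -scaleN1r; apply: (GZ); apply: (GZ)].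
    move=> w' w'G Hw'.
    exists (c^-1 *: (z0 - w')).
      by apply: (GZ); apply: (GD) => //; rewrite -scaleN1r; apply: (GZ).
    rewrite !linearZ /= linearB /= linearB /= Hw' /N.
    by rewrite opprB addrC subrK scalerA mulVf // scale1r.
  have [a [_ Ha]] := Eul j z zG.
  have [w wG Hw] := main a z zG Ha.
  by exists (D w) => //; exact: DG.
move=> j z jn0 zG Xz.
have jK := intr_neq0_char0 ch0 jn0.
have [a [a0 Ha]] := Eul _ z zG.
have XDz : X (D z) = - z.
  by have := DX z; rewrite Xz linear0 sub0r => /eqP; rewrite eqr_oppLR => /eqP.
have It : forall k, iter k (fun w => X (D w) - ((j - 1)%:~R : K) *: w) z
                 = (- (j%:~R : K)) ^+ k *: z.
  elim=> [|k IH] /=; first by rewrite scale1r.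
  rewrite IH !linearZ /= XDz exprS -scalerA !scalerN !scalerA -opprD -scalerDl -scaleNr.
  by congr (_ *: _); rewrite mulrzBr mulr1z mulrBl mul1r addrC subrK mulNr.
move: Ha; rewrite It => /eqP; rewrite scaler_eq0 expf_eq0 oppr_eq0 (negbTE jK).
by rewrite andbF => /eqP.
Qed.
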